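(* Let $a\in \mathcal{A}^d$ and $x\in\mathcal{A}$. Then the following are equivalent: (1) $a\in \mathcal{A}^{\mathrm{gcEP}}$ and $a^{\mathrm{gcEP}}=x$. (2) $xax=x$, $(ax)^*=ax$, $(xa-1)a^d=0$ and $im(x)\subseteq im(a^d)$. (3) $xax=x$, $\ell(x)=\ell(x^* )=\ell(a^d)$.
   Context: $\mathcal{A}$ is a complex Banach *-algebra with identity. $\mathcal{A}^{qnil}$ is the set of quasinilpotent elements ($\lim_n\|a^n\|^{1/n}=0$). $a\in\mathcal{A}^d$ means $a$ has a generalized Drazin inverse $a^d$, i.e. $a^d$ satisfies $a(a^d)^2=a^d$, $aa^d=a^da$, $a-a^2a^d\in\mathcal{A}^{qnil}$. An element $a$ has a generalized core-EP inverse if there is $x\in\mathcal{A}$ with $x=ax^2$, $(ax)^*=ax$, $\lim_{n\to\infty}\|a^n-xa^{n+1}\|^{1/n}=0$; such $x$ is unique and is denoted $a^{\mathrm{gcEP}}$, and $\mathcal{A}^{\mathrm{gcEP}}$ denotes the set of such elements. $\ell(\cdot)$ denotes the left annihilator, and $im(y)$ denotes the image (principal right ideal) $y\mathcal{A}$. *)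

(* Defs.v *)
From HB Require Import structures.
From mathcomp Require Import all_boot all_order all_algebra.
From mathcomp Require Import all_classical all_reals all_analysis.
From mathcomp Require Import complex.
Set Implicit Arguments. Unset Strict Implicit. Unset Printing Implicit Defensive.
Import Order.TTheory GRing.Theory Num.Theory.
Import numFieldNormedType.Exports.
Local Open Scope classical_set_scope.
Local Open Scope ring_scope.

HB.mixin Record isBanachStarAlgebra (R : realType) A of GRing.Algebra R[i] A := {
  nrm : A -> R ;
  nrm_eq0 : forall a : A, nrm a = 0 -> a = 0 ;
  nrmZ : forall (k : R[i]) (a : A), nrm (k *: a) = Normc.normc k * nrm a ;
  nrmD_le : forall a b : A, nrm (a + b) <= nrm a + nrm b ;
  nrmM_le : forall a b : A, nrm (a * b) <= nrm a * nrm b ;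
  nrm_complete : forall u : nat -> A,
    (forall e : R, 0 < e -> exists N : nat, forall m n : nat,
        (N <= m)%N -> (N <= n)%N -> nrm (u m - u n) < e) ->
    exists l : A, (fun n => nrm (u n - l)) @ \oo --> (0 : R) ;
  star : A -> A ;
  starD : forall a b : A, star (a + b) = star a + star b ;
  starZ : forall (k : R[i]) (a : A), star (k *: a) = k^* *: star a ;
  starM : forall a b : A, star (a * b) = star b * star a ;
  starK : forall a : A, star (star a) = a
}.

#[short(type="banachStarAlgType")]
HB.structure Definition BanachStarAlgebra (R : realType) :=
  { A of isBanachStarAlgebra R A & GRing.Algebra R[i] A }.

Notation "a ^*s" := (star a) (at level 2, format "a ^*s").

Section Defs.
Variables (R : realType) (A : banachStarAlgType R).

Definition nroot_nrm (n : nat) (y : A) : R := (nrm y) `^ (n%:R^-1).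

Definition qnil (a : A) : Prop :=
  (fun n : nat => nroot_nrm n (a ^+ n)) @ \oo --> (0 : R).

Definition is_gDrazin (a b : A) : Prop :=
  [/\ a * (b ^+ 2) = b, a * b = b * a & qnil (a - a ^+ 2 * b)].

Definition is_gcEP (a x : A) : Prop :=
  [/\ x = a * x ^+ 2, (a * x)^*s = a * x &
      (fun n : nat => nroot_nrm n (a ^+ n - x * a ^+ n.+1)) @ \oo --> (0 : R)].

Definition lann (y : A) : set A := [set z | z * y = 0].
Definition im (y : A) : set A := [set y * z | z in [set: A]].
End Defs.

(* Main.v *)
Require Import Defs.
From HB Require Import structures.
From mathcomp Require Import all_boot all_order all_algebra.
From mathcomp Require Import all_classical all_reals all_analysis.
From mathcomp Require Import complex.
From mathcomp Require Import lra.
Import Order.TTheory GRing.Theory Num.Theory.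
Import numFieldNormedType.Exports.
Local Open Scope classical_set_scope.
Local Open Scope ring_scope.
Section Aux.
Variables (R : realType) (A : banachStarAlgType R).
Implicit Types (y z : A).

Lemma nrm0 : nrm (0 : A) = 0.
Proof. by rewrite -(scale0r (0:A)) nrmZ Normc.normc0 mul0r. Qed.

Lemma nrmN y : nrm (- y) = nrm y.
Proof. by rewrite -scaleN1r nrmZ normcN Normc.normc1 mul1r. Qed.

Lemma nrm_ge0 y : 0 <= nrm y.
Proof.
have := nrmD_le y (- y); rewrite subrr nrm0 nrmN.
move=> h; lra.
Qed.

Lemma nrmX_le y n : nrm (y ^+ n.+1) <= nrm y ^+ n.+1.
Proof.
elim: n => [|n IH]; first by rewrite !expr1.
rewrite exprS [nrm y ^+ _]exprS; apply: (le_trans (nrmM_le _ _)).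
by rewrite ler_wpM2l // nrm_ge0.
Qed.

Lemma powK (t : R) n : 0 <= t -> (0 < n)%N -> (t `^ (n%:R^-1)) ^+ n = t.
Proof.
move=> t0 n0; rewrite -powR_mulrn ?powR_ge0 // -powRrM mulVf ?powRr1 //.
by rewrite pnatr_eq0 -lt0n.
Qed.

Lemma nroot_lt n y (e : R) : (0 < n)%N -> 0 < e ->
  (nroot_nrm n y < e) = (nrm y < e ^+ n).
Proof.
move=> n0 e0; rewrite /nroot_nrm.
have h0 := powR_ge0 (nrm y) (n%:R^-1).
apply/idP/idP => H.
  by rewrite -{1}(@powK (nrm y) n (nrm_ge0 y) n0) ltrXn2r // -lt0n.
rewrite ltNge; apply/negP => H2.
have := lerXn2r n (ltW e0) h0 H2.
by rewrite powK ?nrm_ge0 // leNgt H.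
Qed.

Lemma epsP (v : nat -> A) :
  (fun n => nroot_nrm n (v n)) @ \oo --> (0 : R) <->
  forall e : R, 0 < e -> \forall n \near \oo, nrm (v n) < e ^+ n.
Proof.
rewrite cvgr0Pnorm_lt; split => H e e0.
  have [N _ HN] := H e e0.
  exists N.+1 => // n /= Nn.
  rewrite -nroot_lt //; last by apply: leq_ltn_trans Nn.
  have := HN n (ltnW Nn); rewrite /= ger0_norm // /nroot_nrm powR_ge0 //.
have [N _ HN] := H e e0.
exists N.+1 => // n /= Nn.
rewrite ger0_norm ?powR_ge0 // nroot_lt //; last by apply: leq_ltn_trans Nn.
exact: HN (ltnW Nn).
Qed.
End Aux.
Section Aux2.
Variables (R : realType) (A : banachStarAlgType R).
Implicit Types (y z : A).

Lemma nroot_bound (v w : nat -> A) (C K : R) : 0 <= C -> 0 <= K ->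
  (fun n => nroot_nrm n (w n)) @ \oo --> (0 : R) ->
  (forall n, (0 < n)%N -> nrm (v n) <= C * K ^+ n * nrm (w n)) ->
  (fun n => nroot_nrm n (v n)) @ \oo --> (0 : R).
Proof.
move=> C0 K0 /epsP Hw Hb; apply/epsP => e e0.
pose f := e / (1 + C).
have f0 : 0 < f by rewrite divr_gt0 //; lra.
pose e' := f / (1 + K).
have e'0 : 0 < e' by rewrite divr_gt0 //; lra.
have hK : K / (1 + K) <= 1 by rewrite ler_pdivrMr; lra.
have Ke' : K * e' <= f.
  rewrite /e' mulrCA -{2}(mulr1 f); apply: ler_wpM2l => //; lra.
have hC : C / (1 + C) < 1 by rewrite ltr_pdivrMr; lra.
have Cf : C * f < e.
  rewrite /f mulrCA -{2}(mulr1 e); rewrite ltr_pM2l //.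
have fe : f <= e by rewrite /f ler_pdivrMr; nra.
have [N _ HN] := Hw e' e'0.
exists N.+1 => // n /= Nn.
case: n Nn => [//|m] Nm.
apply: le_lt_trans (Hb _ _) _ => //.
have w1 : nrm (w m.+1) <= e' ^+ m.+1 := ltW (HN _ (ltnW Nm)).
apply: (le_lt_trans (y := C * (K*e')^+m.+1)).
  rewrite exprMn mulrA ler_wpM2l // mulr_ge0 // exprn_ge0 //.
apply: (le_lt_trans (y := C * f ^+ m.+1)).
  rewrite ler_wpM2l //; apply: (@lerXn2r _ m.+1 (K*e') f); rewrite ?nnegrE; [nra|lra|done].
rewrite !exprS mulrA.
apply: (le_lt_trans (y := C * f * e ^+ m)).
  have Cf0 : 0 <= C * f by apply: mulr_ge0; lra.
  rewrite ler_wpM2l //.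
  apply: (@lerXn2r _ m f e); rewrite ?nnegrE; lra.
by rewrite ltr_pM2r ?exprn_gt0.
Qed.

Lemma nroot_const0 y : (fun n => nroot_nrm n y) @ \oo --> (0 : R) -> y = 0.
Proof.
move/(@epsP _ _ (fun _ => y)) => H; apply: nrm_eq0; apply/eqP.
rewrite eq_le nrm_ge0 andbT leNgt; apply/negP => y0.
pose e := Num.min (nrm y) 1.
have e0 : 0 < e by rewrite lt_min y0 ltr01.
have e1 : e <= 1 by rewrite ge_min lexx orbT.
have ey : e <= nrm y by rewrite ge_min lexx.
have [N _ HN] := H e e0.
have := HN N.+1 (leqnSn _); rewrite /= exprS.
have : e ^+ N <= 1 by rewrite exprn_ile1 // ltW.
move=> h1 h2.
have h3 : e * e ^+ N <= e * 1 by rewrite ler_wpM2l // ltW.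
rewrite mulr1 in h3; have := lt_le_trans h2 (le_trans h3 ey); by rewrite ltxx.
Qed.
End Aux2.
Section Alg.
Variables (R : realType) (A : banachStarAlgType R) (a ad : A).
Hypothesis Hd1 : a * ad ^+ 2 = ad.
Hypothesis Hd2 : a * ad = ad * a.

Let p := a * ad.

Lemma p_ad : p * ad = ad.
Proof. by rewrite /p -mulrA -expr2. Qed.

Lemma ad_p : ad * p = ad.
Proof. by rewrite /p mulrA -Hd2 p_ad. Qed.

Lemma pp : p * p = p.
Proof. by rewrite {1}/p -mulrA ad_p. Qed.

Lemma pX n : p ^+ n.+1 = p.
Proof. by elim: n => [|n IH]; rewrite ?expr1 // exprS IH pp. Qed.

Lemma aXadX n : a ^+ n.+1 * ad ^+ n.+1 = p.
Proof. by rewrite -exprMn_comm ?pX. Qed.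

Lemma comm_a_p : a * p = p * a.
Proof. by rewrite /p mulrA -[in RHS]mulrA -Hd2 mulrA. Qed.

Lemma qP : a - a ^+ 2 * ad = (1 - p) * a.
Proof. by rewrite mulrBl mul1r -comm_a_p /p expr2 mulrA. Qed.

Lemma onemp2 : (1 - p) * (1 - p) = 1 - p.
Proof. by rewrite mulrBl mul1r mulrBr mulr1 pp subrr subr0. Qed.

Lemma onempX n : (1 - p) ^+ n.+1 = 1 - p.
Proof. by elim: n => [|n IH]; rewrite ?expr1 // exprS IH onemp2. Qed.

Lemma qX n : (a - a ^+ 2 * ad) ^+ n.+1 = (1 - p) * a ^+ n.+1.
Proof.
have c : GRing.comm (1 - p) a.
  by rewrite /GRing.comm mulrBl mulrBr mul1r mulr1 comm_a_p.
by rewrite qP exprMn_comm // onempX.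
Qed.

Lemma comm_p_aX n : p * a ^+ n = a ^+ n * p.
Proof.
have c : GRing.comm p a by rewrite /GRing.comm comm_a_p.
by have := commrX n c; rewrite /GRing.comm.
Qed.

End Alg.
Section Main.
Variables (R : realType) (A : banachStarAlgType R) (a ad x : A).
Hypothesis Hd1 : a * ad ^+ 2 = ad.
Hypothesis Hd2 : a * ad = ad * a.
Hypothesis Hq : qnil (a - a ^+ 2 * ad).

Lemma u_eq n : a ^+ n - x * a ^+ n.+1 = (1 - x * a) * a ^+ n.
Proof. by rewrite mulrBl mul1r exprS !mulrA. Qed.

Lemma imp12 : is_gcEP a x ->
  [/\ x * a * x = x, (a * x)^*s = a * x, (x * a - 1) * ad = 0 & im x `<=` im ad].
Proof.
case=> H1 H2 H3.
have ax2 n : a * x ^+ n.+2 = x ^+ n.+1.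
  by rewrite exprS exprS !mulrA -(mulrA a x x) -expr2 -H1 -exprS.
have xX n : a ^+ n * x ^+ n.+1 = x.
  elim: n => [|n IH]; first by rewrite mul1r expr1.
  by rewrite exprSr -mulrA ax2 IH.
have y1 : (1 - x * a) * (a * ad) = 0.
  apply: nroot_const0.
  apply: (@nroot_bound _ _ _ (fun n => a ^+ n - x * a ^+ n.+1) 1 (nrm ad)) => //.
    exact: nrm_ge0.
  case => [//|m] _.
  rewrite mul1r -(@aXadX _ _ a ad Hd1 Hd2 m) mulrA -u_eq.
  apply: le_trans (nrmM_le _ _) _; rewrite mulrC ler_wpM2r ?nrm_ge0 //.
  exact: nrmX_le.
have y2 : x - x * a * x = 0.
  apply: nroot_const0.
  apply: (@nroot_bound _ _ _ (fun n => a ^+ n - x * a ^+ n.+1) (nrm x) (nrm x)) => //;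
    try exact: nrm_ge0.
  case => [//|m] _.
  rewrite -{1}(mul1r x) -mulrBl -{2}(xX m.+1) mulrA -u_eq.
  apply: le_trans (nrmM_le _ _) _.
  rewrite -exprS mulrC ler_wpM2r ?nrm_ge0 //.
  exact: nrmX_le.
have y3 : (1 - a * ad) * x = 0.
  apply: nroot_const0.
  apply: (@nroot_bound _ _ _ (fun n => (a - a ^+ 2 * ad) ^+ n) (nrm x) (nrm x)) => //;
    try exact: nrm_ge0.
  case => [//|m] _.
  rewrite -{1}(xX m.+1) mulrA -(@qX _ _ a ad Hd1 Hd2 m).
  apply: le_trans (nrmM_le _ _) _.
  rewrite -exprS mulrC ler_wpM2r ?nrm_ge0 //.
  exact: nrmX_le.
have xpx : a * ad * x = x.
  by apply/eqP; rewrite eq_sym -subr_eq0 -[X in X - _]mul1r -mulrBl y3.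
split => //.
- by apply/eqP; rewrite eq_sym -subr_eq0 y2.
- by rewrite -(@p_ad _ _ a ad Hd1) mulrA -(opprB 1 (x * a)) mulNr y1 oppr0 mul0r.
move=> _ [z _ <-]; exists (a * x * z) => //.
by rewrite !mulrA -Hd2 xpx.
Qed.

Lemma facts2 : [/\ x * a * x = x, (a * x)^*s = a * x, (x * a - 1) * ad = 0 & im x `<=` im ad] ->
  [/\ exists z, ad * z = x, x * a * ad = ad, a * ad * x = x & a * x * x = x].
Proof.
case=> H1 H2 H3 H4.
have [z _ xz] : im ad x by apply: H4; exists 1 => //; rewrite mulr1.
have xad : x * a * ad = ad.
  by apply/eqP; rewrite -subr_eq0 -[X in _ - X]mul1r -mulrBl H3.
have px : a * ad * x = x by rewrite -xz !mulrA -(mulrA a ad ad) -expr2 Hd1.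
have e1 : a * (x * a * ad) * x = x by rewrite xad.
have axx : a * x * x = x.
  have -> : a * x * x = a * x * (a * ad * x) by rewrite px.
  by rewrite -[RHS]e1 !mulrA.
by split => //; exists z.
Qed.

Lemma imp21 : [/\ x * a * x = x, (a * x)^*s = a * x, (x * a - 1) * ad = 0 & im x `<=` im ad] ->
  is_gcEP a x.
Proof.
move=> H; have [_ xad px axx] := facts2 H; case: H => H1 H2 H3 H4.
have y0' : (1 - x * a) * ad = 0 by rewrite -(opprB (x * a) 1) mulNr H3 oppr0.
have y0 : (1 - x * a) * (a * ad) = 0 by rewrite Hd2 mulrA y0' mul0r.
split => //; first by rewrite expr2 mulrA axx.
apply: (@nroot_bound _ _ _ (fun n => (a - a ^+ 2 * ad) ^+ n) (nrm (1 - x * a)) 1) => //.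
- exact: nrm_ge0.
case => [//|m] _.
rewrite u_eq (@qX _ _ a ad Hd1 Hd2 m).
rewrite expr1n mulr1.
have -> : (1 - x * a) * a ^+ m.+1 = (1 - x * a) * ((1 - a * ad) * a ^+ m.+1).
  by rewrite (mulrBl _ 1 (a * ad)) mul1r mulrBr mulrA y0 mul0r subr0.
exact: nrmM_le.
Qed.

Lemma imp23 : [/\ x * a * x = x, (a * x)^*s = a * x, (x * a - 1) * ad = 0 & im x `<=` im ad] ->
  x * a * x = x /\ (lann x = lann (x^*s) /\ lann (x^*s) = lann ad).
Proof.
move=> H; have [[z xz] xad px axx] := facts2 H; case: H => H1 H2 H3 H4.
have L1 : lann x = lann ad.
  apply/seteqP; split => w; rewrite /lann /= => h.
    by rewrite -xad !mulrA h !mul0r.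
  by rewrite -xz mulrA h mul0r.
have xs : x^*s = a * x * x^*s by rewrite -{1}H1 !starM mulrA -starM H2.
have xx : x = x^*s * a^*s * x by rewrite -{1}axx -H2 starM.
have L2 : lann x = lann (x^*s).
  apply/seteqP; split => w /= h.
    have hw : w * ad = 0 by have : lann ad w by rewrite -L1.
    rewrite /lann /= {1}xs -{1}xz !mulrA -(mulrA w a ad) Hd2 mulrA hw !mul0r.
    done.
  by rewrite /lann /= xx !mulrA; move: h; rewrite /lann /= => ->; rewrite !mul0r.
split => //; split => //; by rewrite -L2.
Qed.

Lemma imp32 : x * a * x = x /\ (lann x = lann (x^*s) /\ lann (x^*s) = lann ad) ->
  [/\ x * a * x = x, (a * x)^*s = a * x, (x * a - 1) * ad = 0 & im x `<=` im ad].
Proof.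
case=> H1 [L1 L2].
have L3 : lann x = lann ad by rewrite L1 L2.
have inl w : w * x = 0 -> w * ad = 0.
  by move=> h; have : lann ad w by rewrite -L3.
have inlx w : w * x = 0 -> w * x^*s = 0.
  by move=> h; have : lann (x^*s) w by rewrite -L1.
have inr w : w * ad = 0 -> w * x = 0.
  by move=> h; have : lann x w by rewrite L3.
have e1 : (1 - x * a) * x = 0 by rewrite mulrBl mul1r H1 subrr.
have xs : x^*s = x * a * x^*s.
  by apply/eqP; rewrite -subr_eq0 -[X in X - _]mul1r -mulrBl inlx.
have xad : (1 - x * a) * ad = 0 := inl _ e1.
have H3 : (x * a - 1) * ad = 0 by rewrite -(opprB 1 (x * a)) mulNr xad oppr0.
have e2 : (1 - a * ad) * ad = 0 by rewrite mulrBl mul1r -mulrA -expr2 Hd1 subrr.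
have px : a * ad * x = x.
  by apply/eqP; rewrite eq_sym -subr_eq0 -[X in X - _]mul1r -mulrBl inr.
have H4 : im x `<=` im ad.
  by move=> _ [w _ <-]; exists (a * x * w) => //; rewrite !mulrA -Hd2 px.
have ad_eq : x * a * ad = ad.
  by apply/eqP; rewrite -subr_eq0 -[X in _ - X]mul1r -mulrBl H3.
have e3 : a * (x * a * ad) * x = x by rewrite ad_eq.
have axx : a * x * x = x.
  have -> : a * x * x = a * x * (a * ad * x) by rewrite px.
  by rewrite -[RHS]e3 !mulrA.
have ex : a * x * x^*s = x^*s by rewrite {1}xs !mulrA axx -xs.
have ef : a * x * (a * x)^*s = (a * x)^*s by rewrite starM mulrA ex.
have h : (a * x * (a * x)^*s)^*s = a * x * (a * x)^*s by rewrite starM starK.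
rewrite ef starK in h.
by split => //; rewrite -h.
Qed.
End Main.

Theorem theorem2p1 (R : realType) (A : banachStarAlgType R) (a ad x : A) :
  is_gDrazin a ad ->
  [<-> is_gcEP a x;
       [/\ x * a * x = x, (a * x)^*s = a * x, (x * a - 1) * ad = 0
         & im x `<=` im ad];
       x * a * x = x /\ (lann x = lann (x^*s) /\ lann (x^*s) = lann ad)].
Proof.
case=> Hd1 Hd2 Hq.
tfae.
- exact: (@imp12 _ _ a ad x Hd1 Hd2 Hq).
- exact: (@imp23 _ _ a ad x Hd1 Hd2).
- by move=> h; apply: (@imp21 _ _ a ad x Hd1 Hd2 Hq); apply: (@imp32 _ _ a ad x Hd1 Hd2).
Qed.
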